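(* Let $d\ge1$ and $a_1,\dots,a_d>0$, and define $F:(0,\infty)\to\mathbb{R}$ by $$F(k)=2k\sum_{j=1}^d\tan\left(\frac{\pi}{2}\left(\frac{ka_j}{\pi}-\left\lfloor\frac{ka_j}{\pi}\right\rfloor\right)\right).$$ Then: (i) a point $k>0$ is a discontinuity of $F$ if and only if $k=m\pi/a_j$ for some $j\in\{1,\dots,d\}$ and some $m\in\mathbb{N}$; (ii) $F$ is strictly increasing on each interval of continuity; (iii) for every $m\in\mathbb{N}$ and $j\in\{1,\dots,d\}$, $\lim_{k\nearrow m\pi/a_j}F(k)=+\infty$.
   Context: $\lfloor\cdot\rfloor$ denotes the floor function and $\mathbb{N}=\{1,2,3,\dots\}$. *)

(* Defs.v *)
From Stdlib Require Import Reals Lra Lia.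
From Coquelicot Require Import Coquelicot.
Open Scope R_scope.

(* floor x, as a real: Int_part x = up x - 1 is the integer n with n <= x < n + 1. *)
Definition Rfloor (x : R) : R := IZR (Int_part x).

Definition F (d : nat) (a : nat -> R) (k : R) : R :=
  2 * k * sum_n_m (fun j => tan (PI / 2 * (k * a j / PI - Rfloor (k * a j / PI)))) 1 d.

(* Main.v *)
Require Import Defs.
From Stdlib Require Import Reals Lra Lia Classical ZArith.
From Coquelicot Require Import Coquelicot.
Open Scope R_scope.

Lemma floor_unique (n : Z) (s : R) : IZR n <= s < IZR n + 1 -> Rfloor s = IZR n.
Proof.
  intros [H1 H2]. unfold Rfloor, Int_part.
  rewrite <- (tech_up s (n + 1)).
  - rewrite Z.add_simpl_r; reflexivity.
  - rewrite plus_IZR; lra.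
  - rewrite plus_IZR; lra.
Qed.

Lemma floor_spec (s : R) : Rfloor s <= s < Rfloor s + 1.
Proof. unfold Rfloor. destruct (base_Int_part s). lra. Qed.

Lemma floor_ge (z : Z) (s : R) : IZR z <= s -> IZR z <= Rfloor s.
Proof.
  intros H. destruct (floor_spec s) as [A B]. unfold Rfloor in *.
  apply IZR_le. assert (IZR z < IZR (Int_part s + 1)) by (rewrite plus_IZR; lra).
  apply lt_IZR in H0. lia.
Qed.

Definition g (t : R) : R := tan (PI / 2 * (t - Rfloor t)).

Lemma cont_g (t : R) : (forall n : Z, t <> IZR n) -> continuous g t.
Proof.
  intros Hn. set (n := Int_part t).
  destruct (floor_spec t) as [A B]. fold n in A, B. unfold Rfloor in A, B; fold n in A, B.
  assert (A' : IZR n < t) by (destruct A; [auto| exfalso; apply (Hn n); auto]).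
  apply continuous_ext_loc with (g := fun s => tan (PI / 2 * (s - IZR n))).
  - assert (Hp : 0 < Rmin (t - IZR n) (IZR n + 1 - t)) by (apply Rmin_pos; lra).
    exists (mkposreal _ Hp). intros y Hy. simpl in Hy.
    unfold ball in Hy; simpl in Hy; unfold AbsRing_ball, abs, minus, plus, opp in Hy; simpl in Hy.
    apply Rabs_def2 in Hy. destruct Hy as [Hy1 Hy2].
    pose proof (Rmin_l (t - IZR n) (IZR n + 1 - t)). pose proof (Rmin_r (t - IZR n) (IZR n + 1 - t)).
    unfold g. rewrite (floor_unique n y); [reflexivity| lra].
  - apply (ex_derive_continuous (K:=R_AbsRing) (V:=R_NormedModule)). unfold tan. auto_derive.
    apply Rgt_not_eq, cos_gt_0; pose proof PI_RGT_0; nra.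
Qed.

Lemma sum_cont (f : nat -> R -> R) (n m : nat) (k : R) :
  (forall j, (n <= j <= m)%nat -> continuous (f j) k) ->
  continuous (fun x => sum_n_m (fun j => f j x) n m) k.
Proof.
  induction m as [|m IH]; intros Hc.
  - destruct n.
    + apply continuous_ext with (f := f 0%nat). intros; now rewrite sum_n_n. apply Hc; lia.
    + apply continuous_ext with (f := fun _ => 0). intros; rewrite sum_n_m_zero; auto; lia.
      apply continuous_const.
  - destruct (Compare_dec.le_lt_dec n (S m)).
    + apply continuous_ext with (f := fun x => plus (sum_n_m (fun j => f j x) n m) (f (S m) x)).
      intros; now rewrite sum_n_Sm.
      apply (continuous_plus (K:=R_AbsRing) (V:=R_NormedModule)). apply IH; intros; apply Hc; lia. apply Hc; lia.
    + apply continuous_ext with (f := fun _ => 0). intros; rewrite sum_n_m_zero; auto; lia.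
      apply continuous_const.
Qed.

Lemma sum_nonneg (f : nat -> R) (n m : nat) :
  (forall j, (n <= j <= m)%nat -> 0 <= f j) -> 0 <= sum_n_m f n m.
Proof.
  induction m as [|m IH]; intros Hc.
  - destruct n. rewrite sum_n_n; apply Hc; lia. rewrite sum_n_m_zero; [apply Rle_refl|lia].
  - destruct (Compare_dec.le_lt_dec n (S m)).
    + rewrite sum_n_Sm; auto. unfold plus; simpl.
      assert (0 <= sum_n_m f n m) by (apply IH; intros; apply Hc; lia).
      assert (0 <= f (S m)) by (apply Hc; lia). lra.
    + rewrite sum_n_m_zero; [apply Rle_refl|lia].
Qed.

Lemma sum_ge_term (f : nat -> R) (n m j : nat) :
  (forall i, (n <= i <= m)%nat -> 0 <= f i) -> (n <= j <= m)%nat -> f j <= sum_n_m f n m.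
Proof.
  induction m as [|m IH]; intros Hc Hj.
  - assert (j = 0%nat) by lia. assert (n = 0%nat) by lia. subst. rewrite sum_n_n; lra.
  - rewrite sum_n_Sm by lia. unfold plus; simpl.
    destruct (Nat.eq_dec j (S m)).
    + subst. assert (0 <= sum_n_m f n m) by (apply sum_nonneg; intros; apply Hc; lia). lra.
    + assert (f j <= sum_n_m f n m) by (apply IH; [intros; apply Hc; lia| lia]).
      assert (0 <= f (S m)) by (apply Hc; lia). lra.
Qed.

Lemma sum_lt (f h : nat -> R) (n m : nat) :
  (n <= m)%nat -> (forall j, (n <= j <= m)%nat -> f j < h j) -> sum_n_m f n m < sum_n_m h n m.
Proof.
  induction m as [|m IH]; intros Hnm Hc.
  - assert (n = 0%nat) by lia. subst. rewrite !sum_n_n; apply Hc; lia.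
  - rewrite !sum_n_Sm by lia. unfold plus; simpl.
    destruct (Nat.eq_dec n (S m)).
    + subst. rewrite !sum_n_m_zero by lia. unfold zero; simpl.
      assert (f (S m) < h (S m)) by (apply Hc; lia). lra.
    + assert (sum_n_m f n m < sum_n_m h n m) by (apply IH; [lia| intros; apply Hc; lia]).
      assert (f (S m) < h (S m)) by (apply Hc; lia). lra.
Qed.

Lemma tan_big (w : R) : 0 < w <= 1 -> 1 / (2 * w) <= tan (PI / 2 - w).
Proof.
  intros [H1 H2]. pose proof PI2_1.
  unfold tan. rewrite sin_shift, cos_shift.
  assert (Hs : 0 < sin w) by (apply sin_gt_0; lra).
  assert (Hsw : sin w < w) by (apply sin_lt_x; lra).
  assert (Hc : 1/2 <= cos w).
  { replace w with (2 * (w/2)) by field. rewrite cos_2a_sin.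
    assert (0 < sin (w/2)) by (apply sin_gt_0; lra).
    assert (sin (w/2) < w/2) by (apply sin_lt_x; lra). nra. }
  apply Rle_trans with ((1/2) / sin w).
  - assert (/ w < / sin w) by (apply Rinv_lt_contravar; nra).
    unfold Rdiv; rewrite Rinv_mult; lra.
  - apply Rmult_le_compat_r; [apply Rlt_le, Rinv_0_lt_compat; lra| lra].
Qed.

Lemma tan_nonneg (x : R) : 0 <= x < PI / 2 -> 0 <= tan x.
Proof.
  intros [H1 H2]. destruct H1 as [H1|H1].
  - rewrite <- tan_0. left. apply tan_increasing; pose proof PI_RGT_0; lra.
  - subst. rewrite tan_0; lra.
Qed.

Lemma g_nonneg (t : R) : 0 <= g t.
Proof.
  unfold g. destruct (floor_spec t). pose proof PI_RGT_0. apply tan_nonneg. split; nra.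
Qed.

Lemma F_eq (d : nat) (a : nat -> R) (k : R) :
  F d a k = 2 * k * sum_n_m (fun j => g (k * a j / PI)) 1 d.
Proof. reflexivity. Qed.

Lemma part3 (d : nat) (a : nat -> R) (ha : forall j, (1 <= j <= d)%nat -> 0 < a j)
  (j m : nat) : (1 <= j <= d)%nat -> (1 <= m)%nat ->
  filterlim (F d a) (at_left (INR m * PI / a j)) (Rbar_locally p_infty).
Proof.
  intros Hj Hm. pose proof (ha j Hj) as Haj. pose proof PI_RGT_0 as HPI. pose proof PI2_1 as HPI2.
  set (k0 := INR m * PI / a j).
  assert (Hm1 : 1 <= INR m) by (apply (le_INR 1); lia).
  assert (Hk0 : 0 < k0) by (unfold k0; apply Rdiv_lt_0_compat; nra).
  intros P [M HM].
  set (M' := Rabs M + 1).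
  assert (HM' : 0 < M') by (unfold M'; pose proof (Rabs_pos M); lra).
  set (W := Rmin 1 (k0 / (2 * M'))).
  assert (HW : 0 < W) by (unfold W; apply Rmin_pos; [lra| apply Rdiv_lt_0_compat; lra]).
  assert (HW1 : W <= 1) by apply Rmin_l.
  assert (HW2 : W <= k0 / (2 * M')) by apply Rmin_r.
  assert (Heps : 0 < Rmin (k0/2) (2 * W / a j)) by (apply Rmin_pos; [lra| apply Rdiv_lt_0_compat; lra]).
  exists (mkposreal _ Heps). intros y Hy Hyl. simpl in Hy.
  unfold ball in Hy; simpl in Hy; unfold AbsRing_ball, abs, minus, plus, opp in Hy; simpl in Hy.
  apply Rabs_def2 in Hy. destruct Hy as [Hy1 Hy2].
  pose proof (Rmin_l (k0/2) (2 * W / a j)). pose proof (Rmin_r (k0/2) (2 * W / a j)).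
  apply HM.
  set (u := (k0 - y) * a j / PI).
  set (w := PI / 2 * u).
  assert (Hu0 : 0 < u) by (unfold u; apply Rdiv_lt_0_compat; nra).
  assert (Hw : w < W).
  { unfold w, u. assert (k0 - y < 2 * W / a j) by lra.
    apply Rmult_lt_compat_r with (r := a j) in H1; [|lra].
    replace (2 * W / a j * a j) with (2 * W) in H1 by (field; lra).
    replace (PI / 2 * ((k0 - y) * a j / PI)) with ((k0 - y) * a j / 2) by (field; lra). lra. }
  assert (Hw0 : 0 < w) by (unfold w; nra).
  assert (Hu1 : u < 1) by (unfold w in Hw; nra).
  assert (Ht : y * a j / PI = INR m - u).
  { unfold u, k0. field. split; lra. }
  assert (Hfl : Rfloor (y * a j / PI) = INR m - 1).
  { rewrite (floor_unique (Z.of_nat m - 1)).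
    - rewrite minus_IZR, <- INR_IZR_INZ. reflexivity.
    - rewrite minus_IZR, <- INR_IZR_INZ. lra. }
  assert (Hterm : g (y * a j / PI) = tan (PI / 2 - w)).
  { unfold g. rewrite Hfl, Ht. f_equal. unfold w. ring. }
  assert (Hbig : 1 / (2 * w) <= g (y * a j / PI)) by (rewrite Hterm; apply tan_big; lra).
  assert (Hsum : g (y * a j / PI) <= sum_n_m (fun i => g (y * a i / PI)) 1 d).
  { apply (sum_ge_term (fun i => g (y * a i / PI))); [intros; apply g_nonneg| lia]. }
  rewrite F_eq.
  assert (Hy0 : k0 / 2 < y) by lra.
  assert (H2 : 2 * y * (1 / (2 * w)) = y / w) by (field; lra).
  assert (H3 : 2 * y * (1 / (2 * w)) <= 2 * y * sum_n_m (fun i => g (y * a i / PI)) 1 d)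
    by (apply Rmult_le_compat_l; lra).
  assert (H4 : M' < y / w).
  { apply Rmult_lt_reg_r with w; [lra|]. unfold Rdiv. rewrite Rmult_assoc, Rinv_l, Rmult_1_r by lra.
    assert (M' * W <= k0 / 2).
    { apply Rmult_le_compat_l with (r := M') in HW2; [|lra].
      replace (M' * (k0 / (2 * M'))) with (k0/2) in HW2 by (field; lra). lra. }
    nra. }
  unfold M' in H4. pose proof (Rle_abs M). lra.
Qed.

Lemma not_cont (d : nat) (a : nat -> R) (ha : forall j, (1 <= j <= d)%nat -> 0 < a j)
  (j m : nat) : (1 <= j <= d)%nat -> (1 <= m)%nat ->
  ~ continuous (F d a) (INR m * PI / a j).
Proof.
  intros Hj Hm Hc. set (k0 := INR m * PI / a j).
  pose proof (part3 d a ha j m Hj Hm) as H3. fold k0 in H3.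
  assert (A : at_left k0 (fun x => F d a k0 + 1 < F d a x)).
  { apply H3. exists (F d a k0 + 1). auto. }
  assert (B : at_left k0 (fun x => ball (F d a k0) (mkposreal 1 Rlt_0_1) (F d a x))).
  { destruct (Hc _ (locally_ball (F d a k0) (mkposreal 1 Rlt_0_1))) as [e He].
    exists e. intros y Hy _. apply He. exact Hy. }
  destruct (filter_ex _ (filter_and _ _ A B)) as [x [Hx1 Hx2]].
  unfold ball in Hx2; simpl in Hx2; unfold AbsRing_ball, abs, minus, plus, opp in Hx2; simpl in Hx2.
  apply Rabs_def2 in Hx2. lra.
Qed.

Lemma cont_F (d : nat) (a : nat -> R) (ha : forall j, (1 <= j <= d)%nat -> 0 < a j) (k : R) :
  0 < k -> (forall j m, (1 <= j <= d)%nat -> (1 <= m)%nat -> k <> INR m * PI / a j) ->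
  continuous (F d a) k.
Proof.
  intros Hk Hn. pose proof PI_RGT_0 as HPI.
  apply continuous_ext with (f := fun x => mult (2 * x) (sum_n_m (fun j => g (x * a j / PI)) 1 d)).
  { intros; reflexivity. }
  apply (continuous_mult (K:=R_AbsRing)).
  - apply (ex_derive_continuous (K:=R_AbsRing) (V:=R_NormedModule)). auto_derive. auto.
  - apply (sum_cont (fun j x => g (x * a j / PI))). intros j Hj.
    apply (continuous_comp (fun x => x * a j / PI) g).
    + apply (ex_derive_continuous (K:=R_AbsRing) (V:=R_NormedModule)). auto_derive. lra.
    + apply cont_g. intros n Hn'. pose proof (ha j Hj).
      assert (0 < IZR n) by (rewrite <- Hn'; apply Rdiv_lt_0_compat; nra).
      apply lt_0_IZR in H0.
      apply (Hn j (Z.to_nat n) Hj). lia.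
      rewrite INR_IZR_INZ, Z2Nat.id by lia. rewrite <- Hn'. field. lra.
Qed.

Theorem lemma3p1 (d : nat) (a : nat -> R)
  (hd : (1 <= d)%nat) (ha : forall j, (1 <= j <= d)%nat -> 0 < a j) :
  (* (i) discontinuities *)
  (forall k, 0 < k ->
     (~ continuous (F d a) k <->
      exists j m, (1 <= j <= d)%nat /\ (1 <= m)%nat /\ k = INR m * PI / a j))
  /\
  (* (ii) strictly increasing on each interval of continuity *)
  (forall x y, 0 < x -> x < y ->
     (forall z, x <= z <= y -> continuous (F d a) z) ->
     F d a x < F d a y)
  /\
  (* (iii) left limits at discontinuities are +oo *)
  (forall j m, (1 <= j <= d)%nat -> (1 <= m)%nat ->
     filterlim (F d a) (at_left (INR m * PI / a j)) (Rbar_locally p_infty)).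
Proof.
  split; [|split].
  - intros k Hk. split.
    + intros Hnc. apply NNPP. intros Hne. apply Hnc. apply cont_F; auto.
      intros j m Hj Hm Heq. apply Hne. exists j, m. auto.
    + intros [j [m [Hj [Hm ->]]]]. apply not_cont; auto.
  - intros x y Hx Hxy Hc. pose proof PI_RGT_0 as HPI. rewrite !F_eq.
    assert (HS : sum_n_m (fun j => g (x * a j / PI)) 1 d < sum_n_m (fun j => g (y * a j / PI)) 1 d).
    { apply sum_lt; auto. intros j Hj. pose proof (ha j Hj) as Haj.
      set (tx := x * a j / PI). set (ty := y * a j / PI).
      assert (Htx : 0 < tx) by (unfold tx; apply Rdiv_lt_0_compat; nra).
      assert (Htxy : tx < ty).
      { unfold tx, ty, Rdiv. apply Rmult_lt_compat_r. apply Rinv_0_lt_compat; lra. nra. }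
      set (n := Int_part ty).
      destruct (floor_spec ty) as [F1 F2]. unfold Rfloor in F1, F2; fold n in F1, F2.
      assert (Hn : IZR n <= tx).
      { apply Rnot_lt_le. intros Hlt.
        assert (0 < IZR n) by lra. apply lt_0_IZR in H.
        apply (not_cont d a ha j (Z.to_nat n) Hj ltac:(lia)).
        rewrite INR_IZR_INZ, Z2Nat.id by lia.
        apply Hc. split.
        - unfold tx in Hlt. apply Rmult_lt_compat_r with (r := PI / a j) in Hlt; [|apply Rdiv_lt_0_compat; lra].
          replace (x * a j / PI * (PI / a j)) with x in Hlt by (field; lra). lra.
        - unfold ty in F1. apply Rmult_le_compat_r with (r := PI / a j) in F1; [|left; apply Rdiv_lt_0_compat; lra].
          replace (y * a j / PI * (PI / a j)) with y in F1 by (field; lra). lra. }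
      unfold g. fold tx ty.
      rewrite (floor_unique n tx) by lra. rewrite (floor_unique n ty) by lra.
      apply tan_increasing; nra. }
    assert (0 <= sum_n_m (fun j => g (x * a j / PI)) 1 d) by (apply sum_nonneg; intros; apply g_nonneg).
    nra.
  - intros j m Hj Hm. apply part3; auto.
Qed.
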